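(* Let $n\ge 3$ and let $F$ be a minimal set of faulty edges of $Q_n$. Let $T$ be a set disconnected halfway with respect to $F$ such that no proper subset of $T$ is disconnected halfway with respect to $F$. Then: (1) if $|T|=4$, then $T$ is the vertex set of a 2-dimensional subcube (a 4-cycle of $Q_n$); (2) if $|T|=6$, then the subgraph of $Q_n$ induced by $T$ contains a cycle of length 6; (3) if $|T|=8$, then either the subgraph induced by $T$ contains a cycle of length 8, or $Q_n-F$ contains a CL trap.
   Context: $Q_n$ is the $n$-dimensional hypercube on the binary strings of length $n$, two strings adjacent iff they differ in exactly one bit; a $k$-dimensional subcube is the set of vertices obtained by fixing $n-k$ coordinates. The parity of a vertex is the number of ones in its label modulo 2; $|T|_0,|T|_1$ denote the numbers of parity-0 and parity-1 vertices of $T$. $F$ is a set of ''faulty'' edges and $Q_n-F$ is the graph on all vertices of $Q_n$ with the edges of $Q_n$ not in $F$ (the ''healthy'' edges). $F$ is minimal if $Q_n-F$ has no Hamiltonian cycle but $Q_n-F'$ has one for every proper subset $F'\subsetneq F$. A nonempty proper subset $T$ of the vertices is disconnected halfway (with respect to $F$) if either (1) $|T|_0\ge |T|_1$ and every edge joining a vertex of parity 0 in $T$ to a vertex outside $T$ is in $F$, or (2) $|T|_1\ge |T|_0$ and every edge joining a vertex of parity 1 in $T$ to a vertex outside $T$ is in $F$. A CL trap in $Q_n-F$ is a vertex $u$ together with three neighbours $v,w,x$ such that the edges $(u,v),(u,w),(u,x)$ are healthy and each of $v,w,x$ has degree exactly 2 in $Q_n-F$. *)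

(* Defs.v *)
From HB Require Import structures.
From mathcomp Require Import all_boot.
Set Implicit Arguments. Unset Strict Implicit. Unset Printing Implicit Defensive.

Definition vtx (n : nat) := {ffun 'I_n -> bool}.

Definition adj n (u v : vtx n) : bool := #|[set i | u i != v i]| == 1.

Definition is_edge n (e : {set vtx n}) : Prop :=
  exists u v : vtx n, adj u v /\ e = [set u; v].

Definition edge_set n (F : {set {set vtx n}}) : Prop :=
  forall e, e \in F -> is_edge e.

Definition healthy n (F : {set {set vtx n}}) (u v : vtx n) : bool :=
  adj u v && ([set u; v] \notin F).

Definition parity n (u : vtx n) : bool := odd #|[set i | u i]|.

Definition hamiltonian n (F : {set {set vtx n}}) : Prop :=
  exists s : seq (vtx n),
    [/\ uniq s, (forall v, v \in s) & cycle (healthy F) s].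

Definition minimal_faulty n (F : {set {set vtx n}}) : Prop :=
  ~ hamiltonian F /\ (forall F' : {set {set vtx n}}, F' \proper F -> hamiltonian F').

Definition disc_halfway n (F : {set {set vtx n}}) (T : {set vtx n}) : Prop :=
  [/\ T != set0, T != setT &
    ((#|[set x in T | ~~ parity x]| >= #|[set x in T | parity x]| /\
      forall u v, u \in T -> ~~ parity u -> v \notin T -> adj u v ->
                  [set u; v] \in F)
     \/
     (#|[set x in T | parity x]| >= #|[set x in T | ~~ parity x]| /\
      forall u v, u \in T -> parity u -> v \notin T -> adj u v ->
                  [set u; v] \in F))].

Definition is_subcube n (k : nat) (T : {set vtx n}) : Prop :=
  exists (S : {set 'I_n}) (x : vtx n),
    #|S| = k /\ T = [set y : vtx n | [forall i, (i \notin S) ==> (y i == x i)]].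

Definition induced_cycle_len n (T : {set vtx n}) (l : nat) : Prop :=
  exists s : seq (vtx n),
    [/\ size s = l, uniq s, {subset s <= T} & cycle (@adj n) s].

Definition degF n (F : {set {set vtx n}}) (v : vtx n) : nat :=
  #|[set y | healthy F v y]|.

Definition CL_trap n (F : {set {set vtx n}}) : Prop :=
  exists u v w x : vtx n,
    [/\ [&& v != w, v != x & w != x],
        [&& healthy F u v, healthy F u w & healthy F u x] &
        [/\ degF F v = 2, degF F w = 2 & degF F x = 2]].

(* Main.v *)
Require Import Defs.
From HB Require Import structures.
From mathcomp Require Import all_boot zify.
Set Implicit Arguments. Unset Strict Implicit. Unset Printing Implicit Defensive.

Fixpoint lists (k:nat) : seq (seq bool) :=
  if k is k'.+1 then [seq b :: l | b <- [:: true; false], l <- lists k'] else [:: [::]].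
Fixpoint lall (T : Type) (a : T -> bool) s :=
  if s is x::s' then (if a x then lall a s' else false) else true.
Fixpoint lhas (T : Type) (a : T -> bool) s :=
  if s is x::s' then (if a x then true else lhas a s') else false.
Lemma lallE T (a : T -> bool) s : lall a s = all a s.
Proof. by elim: s => //= x s ->; case: (a x). Qed.
Lemma lhasE T (a : T -> bool) s : lhas a s = has a s.
Proof. by elim: s => //= x s ->; case: (a x). Qed.
Lemma lists_mem k l : size l = k -> l \in lists k.
Proof.
elim: k l => [|k IH] [|x l] //= [Hs].
by case: x; rewrite !mem_cat map_f ?orbT // IH.
Qed.

Definition gl m (l : seq bool) i j := nth false l (i * m + j).
Definition NL (g : nat -> nat -> bool) m (A : seq nat) := [seq j <- iota 0 m | has (fun i => g i j) A].
Definition hall g m := lall (fun mk => let A := mask mk (iota 0 m) in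
   if (0 < size A < m) then (size A < size (NL g m A)) else true) (lists m).
Definition cyc_ok (g : nat -> nat -> bool) m p q :=
  lall (fun i => g (nth 0 p i) (nth 0 q i) && g (nth 0 p (if i.+1 == m then 0 else i.+1)) (nth 0 q i)) (iota 0 m).
Definition has_cyc g m := let P := permutations (iota 0 m) in
  lhas (fun p => lhas (fun q => cyc_ok g m p q) P) P.
Definition deg2 g m i := size (NL g m [:: i]) == 2.
Definition has_trap g m := lhas (fun i1 => lhas (fun i2 => lhas (fun i3 => lhas (fun j =>
  [&& i1 < i2, i2 < i3, g i1 j, g i2 j, g i3 j, deg2 g m i1, deg2 g m i2 & deg2 g m i3])
  (iota 0 m)) (iota 0 m)) (iota 0 m)) (iota 0 m).
Definition chk4 l := if hall (gl 4 l) 4 then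
   (if has_cyc (gl 4 l) 4 then true else has_trap (gl 4 l) 4) else true.
Lemma c4 : lall chk4 (lists 16).
Proof. vm_compute. reflexivity. Qed.
Definition chk3 l := if hall (gl 3 l) 3 then has_cyc (gl 3 l) 3 else true.
Lemma c3 : lall chk3 (lists 9).
Proof. vm_compute. reflexivity. Qed.
Definition chk2 l := if hall (gl 2 l) 2 then
  [&& gl 2 l 0 0, gl 2 l 0 1, gl 2 l 1 0 & gl 2 l 1 1] else true.
Lemma c2 : lall chk2 (lists 4).
Proof. vm_compute. reflexivity. Qed.

Lemma fin4 l : size l = 16 -> hall (gl 4 l) 4 -> has_cyc (gl 4 l) 4 \/ has_trap (gl 4 l) 4.
Proof.
move=> Hs Hh; have := c4; rewrite lallE => /allP /(_ l (lists_mem Hs)).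
by rewrite /chk4 Hh; case: ifP => _ ; [left|right].
Qed.
Lemma fin3 l : size l = 9 -> hall (gl 3 l) 3 -> has_cyc (gl 3 l) 3.
Proof.
move=> Hs Hh; have := c3; rewrite lallE => /allP /(_ l (lists_mem Hs)).
by rewrite /chk3 Hh.
Qed.
Lemma fin2 l : size l = 4 -> hall (gl 2 l) 2 ->
  [&& gl 2 l 0 0, gl 2 l 0 1, gl 2 l 1 0 & gl 2 l 1 1].
Proof.
move=> Hs Hh; have := c2; rewrite lallE => /allP /(_ l (lists_mem Hs)).
by rewrite /chk2 Hh.
Qed.

Lemma adjP n (u v : vtx n) : adj u v -> exists i, forall k, v k = u k (+) (k == i).
Proof.
rewrite /adj => /cards1P [i Hi]; exists i => k.
move/setP: Hi => /(_ k); rewrite !inE => <-.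
by case: (u k); case: (v k).
Qed.

Lemma adj_sym n (u v : vtx n) : adj u v = adj v u.
Proof. by rewrite /adj; congr (_ == _); apply: eq_card => k; rewrite !inE eq_sym. Qed.

Lemma healthy_sym n F (u v : vtx n) : healthy F u v = healthy F v u.
Proof. by rewrite /healthy adj_sym setUC. Qed.

Lemma odd_flip n (S : {set 'I_n}) i :
  odd #|[set k | (k \in S) (+) (k == i)]| = ~~ odd #|S|.
Proof.
case Hi: (i \in S).
  have -> : [set k | (k \in S) (+) (k == i)] = S :\ i.
    apply/setP => k; rewrite !inE; case: (k =P i) => [->|/eqP ki]; rewrite ?Hi ?ki //=.
    by rewrite addbF.
  by rewrite (cardsD1 i S) Hi /= negbK.
have -> : [set k | (k \in S) (+) (k == i)] = i |: S.
  apply/setP => k; rewrite !inE; case: (k =P i) => [->|/eqP ki]; rewrite ?Hi ?ki ?eqxx //=.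
  by rewrite addbF.
by rewrite cardsU1 Hi.
Qed.

Lemma adj_parity n (u v : vtx n) : adj u v -> parity v = ~~ parity u.
Proof.
case/adjP => i Hi; rewrite /parity -(odd_flip _ i).
by congr (odd _); apply: eq_card => k; rewrite !inE Hi.
Qed.

Definition Tb n (T : {set vtx n}) b := [set x in T | parity x == b].
Definition NB n (F : {set {set vtx n}}) (T A : {set vtx n}) :=
  [set y in T | [exists a in A, healthy F a y]].
Definition edgesF n (F : {set {set vtx n}}) (T : {set vtx n}) b :=
  forall u v, u \in T -> parity u = b -> v \notin T -> adj u v -> [set u; v] \in F.

Lemma TbT n (T : {set vtx n}) : Tb T true = [set x in T | parity x].
Proof. by apply/setP => x; rewrite !inE eqb_id. Qed.
Lemma TbF n (T : {set vtx n}) : Tb T false = [set x in T | ~~ parity x].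
Proof. by apply/setP => x; rewrite !inE eqbF_neg. Qed.

Lemma half_disc n F (T : {set vtx n}) b : T != set0 -> T != setT ->
  #|Tb T (~~b)| <= #|Tb T b| -> edgesF F T b -> disc_halfway F T.
Proof.
move=> H1 H2 H3 H4; split => //.
case: b H3 H4 => H3 H4; [right|left]; split.
- by rewrite -TbT -TbF.
- by move=> u v Hu Hp; apply: H4.
- by rewrite -TbT -TbF.
- by move=> u v Hu Hp; apply: H4 => //; apply: negbTE.
Qed.

Lemma disc_half n F (T : {set vtx n}) : disc_halfway F T -> exists b,
  [/\ T != set0, T != setT, #|Tb T (~~b)| <= #|Tb T b| & edgesF F T b].
Proof.
case=> H1 H2 [[H3 H4]|[H3 H4]].
- exists false; split => //; try by rewrite /= TbT TbF.
  by move=> u v Hu Hp; apply: H4 => //; rewrite Hp.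
- exists true; split => //; try by rewrite /= TbT TbF.
Qed.

Lemma NB_sub n F (T A : {set vtx n}) b :
  A \subset Tb T b -> NB F T A \subset Tb T (~~b).
Proof.
move=> HA; apply/subsetP => y; rewrite !inE => /andP [yT /existsP [a /andP [aA hay]]].
rewrite yT /=; move: (subsetP HA a aA); rewrite !inE => /andP [_ /eqP <-].
by rewrite (adj_parity (andP hay).1).
Qed.

Lemma Tb_subT n (T : {set vtx n}) b : Tb T b \subset T.
Proof. by apply/subsetP => x; rewrite inE => /andP []. Qed.

Lemma hallV n F (T A : {set vtx n}) b :
  (forall T' : {set vtx n}, T' \proper T -> ~ disc_halfway F T') ->
  T != setT -> edgesF F T b ->
  A \subset Tb T b -> A != set0 -> #|NB F T A| <= #|A| -> #|T| <= #|A| + #|NB F T A|.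
Proof.
move=> minT HT H4 HA A0 HN; rewrite leqNgt; apply/negP => Hlt.
have ST : A :|: NB F T A \subset T.
  rewrite subUset (subset_trans HA (Tb_subT _ _)) /=.
  by apply/subsetP => y; rewrite inE => /andP [].
have Hc : #|A :|: NB F T A| < #|T|.
  by apply: leq_ltn_trans Hlt; rewrite cardsU leq_subr.
apply: (minT (A :|: NB F T A)); first by rewrite properEcard ST.
apply: (half_disc (b := b)).
- apply/set0Pn; case/set0Pn: A0 => a aA; exists a; by rewrite inE aA.
- apply/eqP => E; move: Hc; rewrite E cardsT; move: (max_card (mem T)).
  by move=> H1 H2; move: (leq_trans H2 H1); rewrite ltnn.
- apply: leq_trans (subset_leq_card (_ : A \subset _)); last first.
    apply/subsetP => x xA; rewrite !inE xA /=.
    by move: (subsetP HA x xA); rewrite !inE => /andP [].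
  apply: leq_trans HN; apply: subset_leq_card; apply/subsetP => x.
  rewrite !inE => /andP [/orP [xA|xN] /eqP px].
    by move: (subsetP HA x xA); rewrite !inE px => /andP [_]; case: b {HA H4} px.
  by [].
- move=> u v; rewrite !inE => /orP [uA|uN] pu.
    rewrite negb_or => /andP [vA vN] auv.
    have uT : u \in T by move: (subsetP HA u uA); rewrite !inE => /andP [].
    case vT: (v \in T); last by apply: H4 => //; rewrite vT.
    move: vN; rewrite vT /= => nex.
    have hu : ~~ healthy F u v.
      by apply/negP => h; apply: (negP nex); apply/existsP; exists u; rewrite uA h.
    by move: hu; rewrite /healthy auv /= negbK.
  move: uN => /andP [_ /existsP [a /andP [aA hau]]].
  move: (subsetP HA a aA); rewrite !inE => /andP [_ /eqP pa].
  by move: (adj_parity (andP hau).1); rewrite pu pa; case: b {HA H4 pu pa}.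
Qed.

Lemma Tb_card n (T : {set vtx n}) b : #|Tb T b| + #|Tb T (~~b)| = #|T|.
Proof.
rewrite -(cardsID [set x | parity x == b] T); congr (_ + _); apply: eq_card => x;
  rewrite !inE; case: (parity x); case: b => //=; by rewrite ?andbT ?andbF.
Qed.

Lemma sizes n F (T : {set vtx n}) b m :
  (forall T' : {set vtx n}, T' \proper T -> ~ disc_halfway F T') ->
  T != setT -> edgesF F T b -> #|Tb T (~~b)| <= #|Tb T b| -> #|T| = m + m -> 1 < m ->
  #|Tb T b| = m /\ #|Tb T (~~b)| = m.
Proof.
move=> minT HT H4 H3 Hm m1; have Hc := Tb_card T b.
suff : #|Tb T b| <= m by lia.
rewrite leqNgt; apply/negP => Hgt.
pose A := [set x in take m.-1 (enum (Tb T b))].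
have cA : #|A| = m.-1.
  rewrite cardsE; move/card_uniqP: (take_uniq m.-1 (enum_uniq (mem (Tb T b)))) => ->.
  by rewrite size_takel // -cardE; apply: leq_trans (leq_pred m) (ltnW Hgt).
have HA : A \subset Tb T b.
  by apply/subsetP => x; rewrite inE => /mem_take; rewrite mem_enum.
have A0 : A != set0 by apply/eqP => E; move: cA; rewrite E cards0; lia.
have HN : #|NB F T A| <= #|Tb T (~~b)| by apply: subset_leq_card; apply: NB_sub HA.
rewrite -subn1 in cA.
have HN' : #|NB F T A| <= #|A| by lia.
have := hallV minT HT H4 HA A0 HN'; lia.
Qed.

Definition x0 n : vtx n := [ffun=> false].
Definition Av n (T : {set vtx n}) b i := nth (x0 n) (enum (Tb T b)) i.
Definition gseq n (F : {set {set vtx n}}) T b m :=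
  [seq healthy F (Av T b (k %/ m)) (Av T (~~b) (k %% m)) | k <- iota 0 (m * m)].

Lemma size_gseq n F (T : {set vtx n}) b m : size (gseq F T b m) = m * m.
Proof. by rewrite size_map size_iota. Qed.

Lemma Av_in n (T : {set vtx n}) b i : i < #|Tb T b| -> Av T b i \in Tb T b.
Proof. by move=> Hi; rewrite -mem_enum /Av mem_nth // -cardE. Qed.

Lemma Av_inj n (T : {set vtx n}) b i j : i < #|Tb T b| -> j < #|Tb T b| ->
  (Av T b i == Av T b j) = (i == j).
Proof. by move=> Hi Hj; rewrite /Av nth_uniq ?enum_uniq // -cardE. Qed.

Lemma gE n F (T : {set vtx n}) b m i j : i < m -> j < m ->
  gl m (gseq F T b m) i j = healthy F (Av T b i) (Av T (~~b) j).
Proof.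
move=> Hi Hj; rewrite /gl /gseq (nth_map 0); last by rewrite size_iota; nia.
rewrite nth_iota; last by nia.
have m0 : 0 < m by lia.
by rewrite add0n divnMDl // divn_small // addn0 modnMDl modn_small.
Qed.

Lemma card_AvI n (T : {set vtx n}) b m I : #|Tb T b| = m -> uniq I ->
  all (fun i => i < m) I -> #|[set x in map (Av T b) I]| = size I.
Proof.
move=> Hm uI /allP aI; rewrite cardsE -(size_map (Av T b) I); apply/card_uniqP.
rewrite (map_inj_in_uniq) // => x y xI yI /eqP.
by rewrite Av_inj ?Hm ?aI // => /eqP.
Qed.

Lemma NB_AvI n F (T : {set vtx n}) b m I :
  #|Tb T b| = m -> #|Tb T (~~b)| = m -> all (fun i => i < m) I ->
  NB F T [set x in map (Av T b) I] =
  [set x in map (Av T (~~b)) (NL (gl m (gseq F T b m)) m I)].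
Proof.
move=> Hb Hnb /allP aI; apply/setP => y; rewrite /NB !inE; apply/idP/idP.
- case/andP => yT /existsP [a /andP [aI' hay]].
  move: aI'; rewrite inE => /mapP [i iI ai]; subst a.
  have im := aI i iI.
  have pa : parity (Av T b i) = b.
    by move: (Av_in (i := i) (T := T) (b := b)); rewrite Hb inE => /(_ im) /andP [_ /eqP].
  have yn : y \in enum (Tb T (~~b)).
    by rewrite mem_enum inE yT (adj_parity (andP hay).1) pa eqxx.
  have jm : index y (enum (Tb T (~~b))) < m by rewrite -Hnb cardE index_mem.
  apply/mapP; exists (index y (enum (Tb T (~~b)))); last by rewrite /Av nth_index.
  rewrite mem_filter mem_iota /= jm andbT; apply/hasP; exists i => //.
  by rewrite gE // /Av nth_index.
- case/mapP => j; rewrite mem_filter mem_iota /= => /andP [/hasP [i iI gij] jm] ->.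
  have im := aI i iI.
  rewrite gE // in gij.
  have := Av_in (T := T) (b := ~~b) (i := j); rewrite Hnb inE => /(_ jm) /andP [-> _] /=.
  by apply/existsP; exists (Av T b i); rewrite inE map_f.
Qed.

Lemma NL_ok g m I : uniq (NL g m I) /\ all (fun i => i < m) (NL g m I).
Proof.
split; first by rewrite filter_uniq ?iota_uniq.
by apply/allP => j; rewrite mem_filter mem_iota => /andP [_].
Qed.

Lemma hall_g n F (T : {set vtx n}) b m :
  (forall T' : {set vtx n}, T' \proper T -> ~ disc_halfway F T') ->
  T != setT -> edgesF F T b -> #|Tb T b| = m -> #|Tb T (~~b)| = m -> #|T| = m + m ->
  hall (gl m (gseq F T b m)) m.
Proof.
move=> minT HT H4 Hb Hnb HTm.
rewrite /hall lallE; apply/allP => mk _ /=.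
set I := mask mk (iota 0 m); case: ifP => // /andP [s0 sm].
have sI : subseq I (iota 0 m) := mask_subseq _ _.
have uI : uniq I := subseq_uniq sI (iota_uniq 0 m).
have aI : all (fun i => i < m) I.
  by apply/allP => i /(mem_subseq sI); rewrite mem_iota.
rewrite ltnNge; apply/negP => Hle.
have AS : [set x in map (Av T b) I] \subset Tb T b.
  by apply/subsetP => x; rewrite inE => /mapP [i iI ->]; apply: Av_in; rewrite Hb (allP aI).
have cA := card_AvI Hb uI aI.
have A0 : [set x in map (Av T b) I] != set0.
  by apply/eqP => E; move: cA; rewrite E cards0 => E'; move: s0; rewrite -E'.
have [uN aN] := NL_ok (gl m (gseq F T b m)) m I.
have cN := card_AvI Hnb uN aN.
have := hallV minT HT H4 AS A0; rewrite (NB_AvI F Hb Hnb aI) cA cN => /(_ Hle).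
move=> H; have H2 : #|T| <= size I + size I by apply: (leq_trans H); rewrite leq_add2l.
move: H2; rewrite HTm; move: sm; clear; lia.
Qed.

Lemma setup n F (T : {set vtx n}) m :
  (forall T' : {set vtx n}, T' \proper T -> ~ disc_halfway F T') ->
  disc_halfway F T -> #|T| = m + m -> 1 < m -> exists b,
  [/\ edgesF F T b, #|Tb T b| = m, #|Tb T (~~b)| = m & hall (gl m (gseq F T b m)) m].
Proof.
move=> minT dT HTm m1; case: (disc_half dT) => b [H1 H2 H3 H4].
have [Hb Hnb] := sizes minT H2 H4 H3 HTm m1.
by exists b; split => //; apply: hall_g.
Qed.

Lemma uniq_filter2 (V : eqType) (P : pred V) (s : seq V) :
  uniq (filter P s) -> uniq (filter (predC P) s) -> uniq s.
Proof.
elim: s => //= x s IH; case Px: (P x) => /=.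
- case/andP => xs u1 u2; rewrite (IH u1 u2) andbT.
  by apply/negP => xs'; move: xs; rewrite mem_filter Px xs'.
- move=> u1 /andP [xs u2]; rewrite (IH u1 u2) andbT.
  by apply/negP => xs'; move: xs; rewrite mem_filter /= Px xs'.
Qed.

Lemma perm_facts m p : p \in permutations (iota 0 m) ->
  [/\ size p = m, uniq p & all (fun i => i < m) p].
Proof.
rewrite mem_permutations => Hp; split.
- by rewrite (perm_size Hp) size_iota.
- by rewrite (perm_uniq Hp) iota_uniq.
- by apply/allP => i; rewrite (perm_mem Hp) mem_iota.
Qed.

Lemma Av_facts n (T : {set vtx n}) b m : #|Tb T b| = m -> #|Tb T (~~b)| = m ->
  [/\ forall i, i < m -> Av T b i \in T,
      forall j, j < m -> Av T (~~b) j \in T,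
      forall i j, i < m -> j < m -> (Av T b i == Av T (~~b) j) = false,
      forall s, all (fun i => i < m) s -> uniq s -> uniq (map (Av T b) s) &
      forall s, all (fun i => i < m) s -> uniq s -> uniq (map (Av T (~~b)) s)].
Proof.
move=> Hb Hnb.
have hA i : i < m -> Av T b i \in Tb T b by move=> Hi; apply: Av_in; rewrite Hb.
have hC j : j < m -> Av T (~~b) j \in Tb T (~~b) by move=> Hj; apply: Av_in; rewrite Hnb.
split.
- by move=> i /hA; rewrite inE => /andP [].
- by move=> j /hC; rewrite inE => /andP [].
- move=> i j /hA; rewrite inE => /andP [_ /eqP pa] /hC; rewrite inE => /andP [_ /eqP pc].
  by apply/negP => /eqP E; move: pa; rewrite E pc; apply: Bool.no_fixpoint_negb.
- move=> s /allP As us; rewrite map_inj_in_uniq // => x y xs ys /eqP.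
  by rewrite Av_inj ?Hb ?As // => /eqP.
- move=> s /allP As us; rewrite map_inj_in_uniq // => x y xs ys /eqP.
  by rewrite Av_inj ?Hnb ?As // => /eqP.
Qed.

Lemma h_adj n F (u v : vtx n) : healthy F u v -> adj u v /\ adj v u.
Proof. by case/andP => h _; split => //; rewrite adj_sym. Qed.

Lemma cyc4 n F (T : {set vtx n}) b : #|Tb T b| = 4 -> #|Tb T (~~b)| = 4 ->
  has_cyc (gl 4 (gseq F T b 4)) 4 -> induced_cycle_len T 8.
Proof.
move=> Hb Hnb; rewrite /has_cyc lhasE => /hasP [p pP]; rewrite lhasE => /hasP [q qP].
have [sp up ap] := perm_facts pP; have [sq uq aq] := perm_facts qP.
have [AT CT AC uA uC] := Av_facts Hb Hnb.
move: (uA p ap up) (uC q aq uq).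
rewrite /cyc_ok lallE /=.
case: p {pP} sp up ap => [|p0 [|p1 [|p2 [|p3 []]]]] //= _ _.
case: q {qP} sq uq aq => [|q0 [|q1 [|q2 [|q3 []]]]] //= _ _.
rewrite !andbT => /and4P [p0m p1m p2m p3m] /and4P [q0m q1m q2m q3m].
rewrite !gE // => uA' uC' Hc.
exists [:: Av T b p0; Av T (~~b) q0; Av T b p1; Av T (~~b) q1;
          Av T b p2; Av T (~~b) q2; Av T b p3; Av T (~~b) q3]; split => //.
- move: uA' uC'; rewrite /= !inE !AC // ![Av T (~~b) _ == Av T b _]eq_sym !AC //=.
  by rewrite !negb_or => /and3P [/and3P [-> -> ->] /andP [-> ->] ->] /and3P [/and3P [-> -> ->] /andP [-> ->] ->].
- have : all (mem T) [:: Av T b p0; Av T (~~b) q0; Av T b p1; Av T (~~b) q1;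
          Av T b p2; Av T (~~b) q2; Av T b p3; Av T (~~b) q3].
    by rewrite /= !AT ?CT.
  by move/allP.
- move: Hc; rewrite /cycle /= => /and5P [/andP [/h_adj [-> _] /h_adj [_ ->]] /andP [/h_adj [-> _] /h_adj [_ ->]]
     /andP [/h_adj [-> _] /h_adj [_ ->]] /h_adj [-> _] /h_adj [_ ->]].
  done.
Qed.

Lemma cyc3 n F (T : {set vtx n}) b : #|Tb T b| = 3 -> #|Tb T (~~b)| = 3 ->
  has_cyc (gl 3 (gseq F T b 3)) 3 -> induced_cycle_len T 6.
Proof.
move=> Hb Hnb; rewrite /has_cyc lhasE => /hasP [p pP]; rewrite lhasE => /hasP [q qP].
have [sp up ap] := perm_facts pP; have [sq uq aq] := perm_facts qP.
have [AT CT AC uA uC] := Av_facts Hb Hnb.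
move: (uA p ap up) (uC q aq uq).
rewrite /cyc_ok lallE /=.
case: p {pP} sp up ap => [|p0 [|p1 [|p2 []]]] //= _ _.
case: q {qP} sq uq aq => [|q0 [|q1 [|q2 []]]] //= _ _.
rewrite !andbT => /and3P [p0m p1m p2m] /and3P [q0m q1m q2m].
rewrite !gE // => uA' uC' Hc.
exists [:: Av T b p0; Av T (~~b) q0; Av T b p1; Av T (~~b) q1;
          Av T b p2; Av T (~~b) q2]; split => //.
- move: uA' uC'; rewrite /= !inE !AC // ![Av T (~~b) _ == Av T b _]eq_sym !AC //=.
  by rewrite !orbF !negb_or => /andP [/andP [-> ->] ->] /andP [/andP [-> ->] ->].
- have : all (mem T) [:: Av T b p0; Av T (~~b) q0; Av T b p1; Av T (~~b) q1;
          Av T b p2; Av T (~~b) q2].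
    by rewrite /= !AT ?CT.
  by move/allP.
- move: Hc; rewrite /cycle /= => /and4P [/andP [/h_adj [-> _] /h_adj [_ ->]] /andP [/h_adj [-> _] /h_adj [_ ->]]
     /h_adj [-> _] /h_adj [_ ->]].
  done.
Qed.

Lemma degF_Av n F (T : {set vtx n}) b m i : edgesF F T b ->
  #|Tb T b| = m -> #|Tb T (~~b)| = m -> i < m ->
  deg2 (gl m (gseq F T b m)) m i -> degF F (Av T b i) = 2.
Proof.
move=> H4 Hb Hnb im /eqP d2.
have vT : Av T b i \in Tb T b by apply: Av_in; rewrite Hb.
move: vT; rewrite inE => /andP [vT /eqP pv].
have aI : all (fun j => j < m) [:: i] by rewrite /= im.
have [uN aN] := NL_ok (gl m (gseq F T b m)) m [:: i].
rewrite /degF -d2 -(card_AvI Hnb uN aN) -(NB_AvI F Hb Hnb aI).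
apply: eq_card => y; rewrite /NB !inE; apply/idP/idP.
- move=> h; have yT : y \in T.
    apply/negPn/negP => yT; have := H4 _ _ vT pv yT (andP h).1.
    by move: h; rewrite /healthy => /andP [_ /negP].
  by rewrite yT /=; apply/existsP; exists (Av T b i); rewrite !inE eqxx h.
- case/andP => _ /existsP [a]; rewrite !inE => /andP [/eqP -> ->].
  done.
Qed.

Lemma trap4 n F (T : {set vtx n}) b : edgesF F T b -> #|Tb T b| = 4 -> #|Tb T (~~b)| = 4 ->
  has_trap (gl 4 (gseq F T b 4)) 4 -> CL_trap F.
Proof.
move=> H4 Hb Hnb; rewrite /has_trap !lhasE => /hasP [i1 i1m].
rewrite lhasE => /hasP [i2 i2m]; rewrite lhasE => /hasP [i3 i3m].
rewrite lhasE => /hasP [j jm].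
move: i1m i2m i3m jm; rewrite !mem_iota /= => i1m i2m i3m jm.
case/and5P => l12 l23 g1 g2 /and4P [g3 d1 d2 d3].
rewrite !gE // in g1 g2 g3.
exists (Av T (~~b) j), (Av T b i1), (Av T b i2), (Av T b i3); split.
- by rewrite !Av_inj ?Hb // !neq_ltn l12 l23 (ltn_trans l12 l23).
- by rewrite !(healthy_sym F (Av T (~~b) j)) g1 g2 g3.
- by split; apply: (degF_Av H4 Hb Hnb).
Qed.

Lemma eq_on2 n (y z : vtx n) i j : y i = z i -> y j = z j ->
  (forall t, t != i -> t != j -> y t = z t) -> y = z.
Proof.
move=> Hi Hj H; apply/ffunP => t.
case: (t =P i) => [->|/eqP ti] //; case: (t =P j) => [->|/eqP tj] //; exact: H.
Qed.

Lemma negb_neq (x y : bool) : (x == y) = false -> x = ~~ y.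
Proof. by case: x; case: y. Qed.

Lemma square n (a b c d : vtx n) : a != b -> c != d ->
  adj a c -> adj b c -> adj a d -> adj b d ->
  is_subcube 2 [set y | [|| y == a, y == b, y == c | y == d]].
Proof.
move=> ab cd ac bc ad bd.
case/adjP: ac => i Hc; rewrite adj_sym in bc; case/adjP: bc => j Hb.
case/adjP: ad => k Hd; rewrite adj_sym in bd; case/adjP: bd => l Hb'.
have Hb2 t : b t = a t (+) (t == i) (+) (t == j) by rewrite Hb Hc.
have ij : i != j.
  apply/eqP => E; move/eqP: ab; apply; apply/ffunP => t.
  by rewrite Hb2 E -addbA addbb addbF.
have kl : k != l.
  apply/eqP => E; move/eqP: ab; apply; apply/ffunP => t.
  by rewrite Hb' Hd E -addbA addbb addbF.
have kj : k = j.
  have := Hb2 k; rewrite Hb' Hd eqxx (negbTE kl) addbF => E.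
  have E' : (k == i) (+) (k == j) = true.
    by move: E; case: (a k); case: (k == i); case: (k == j).
  case: (k =P i) E' => [ki|_]; last by move/eqP.
  move/eqP: cd; case; apply/ffunP => t; by rewrite Hc Hd ki.
subst k.
exists [set i; j], a; split; first by rewrite cards2 ij.
apply/setP => y; rewrite !inE; apply/idP/idP.
- case/or4P => /eqP ->; apply/forallP => t; apply/implyP; rewrite !inE negb_or => /andP [/negbTE ti /negbTE tj];
    by rewrite ?Hb2 ?Hc ?Hd ?ti ?tj ?addbF.
- move/forallP => H.
  have H' t : t != i -> t != j -> y t = a t.
    by move=> ti tj; move: (H t); rewrite !inE negb_or ti tj => /eqP.
  case Ei: (y i == a i); case Ej: (y j == a j).
  + rewrite (@eq_on2 _ y a i j) ?eqxx //; by apply/eqP.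
  + rewrite (@eq_on2 _ y d i j) ?eqxx ?orbT //.
    * by rewrite Hd (negbTE ij) addbF; apply/eqP.
    * by rewrite Hd eqxx addbT; apply: negb_neq.
    * by move=> t ti tj; rewrite Hd (negbTE tj) addbF H'.
  + rewrite (@eq_on2 _ y c i j) ?eqxx ?orbT //.
    * by rewrite Hc eqxx addbT; apply: negb_neq.
    * by rewrite Hc eq_sym (negbTE ij) addbF; apply/eqP.
    * by move=> t ti tj; rewrite Hc (negbTE ti) addbF H'.
  + rewrite (@eq_on2 _ y b i j) ?eqxx ?orbT //.
    * by rewrite Hb2 eqxx (negbTE ij) addbF addbT; apply: negb_neq.
    * by rewrite Hb2 eqxx eq_sym (negbTE ij) addbF addbT; apply: negb_neq.
    * by move=> t ti tj; rewrite Hb2 (negbTE ti) (negbTE tj) !addbF H'.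
Qed.

Lemma Av_cover n (T : {set vtx n}) b y : #|Tb T b| = 2 -> y \in Tb T b ->
  (y == Av T b 0) || (y == Av T b 1).
Proof.
move=> Hb; rewrite -mem_enum => yin.
have := index_mem y (enum (Tb T b)); rewrite yin -cardE Hb.
have := nth_index (x0 n) yin; rewrite /Av.
by case: (index y _) => [|[|k]] //= <- _; rewrite eqxx ?orbT.
Qed.

Lemma sq2 n F (T : {set vtx n}) b : #|Tb T b| = 2 -> #|Tb T (~~b)| = 2 ->
  hall (gl 2 (gseq F T b 2)) 2 -> is_subcube 2 T.
Proof.
move=> Hb Hnb Hh.
have := fin2 (size_gseq F T b 2) Hh; rewrite !gE // => /and4P [h00 h01 h10 h11].
have [AT CT AC uA uC] := Av_facts Hb Hnb.
have E : T = [set y | [|| y == Av T b 0, y == Av T b 1, y == Av T (~~b) 0 | y == Av T (~~b) 1]].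
  apply/setP => y; rewrite inE; apply/idP/idP.
  - move=> yT; case Py: (parity y == b).
    + have : y \in Tb T b by rewrite inE yT Py.
      by move/(Av_cover Hb)/orP => [->|->]; rewrite ?orbT.
    + have : y \in Tb T (~~b) by rewrite inE yT; move: Py; case: (parity y); case: b {Hb Hnb Hh h00 h01 h10 h11 AT CT AC uA uC}.
      by move/(Av_cover Hnb)/orP => [->|->]; rewrite ?orbT.
  - by case/or4P => /eqP ->; rewrite ?AT ?CT.
rewrite E; apply: square.
- by rewrite Av_inj ?Hb.
- by rewrite Av_inj ?Hnb.
- exact: (h_adj h00).1.
- exact: (h_adj h10).1.
- exact: (h_adj h01).1.
- exact: (h_adj h11).1.
Qed.

Unset Implicit Arguments.

Theorem lemma5 (n : nat) (F : {set {set vtx n}}) (T : {set vtx n}) :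
  3 <= n -> edge_set F -> minimal_faulty F ->
  disc_halfway F T ->
  (forall T' : {set vtx n}, T' \proper T -> ~ disc_halfway F T') ->
  [/\ #|T| = 4 -> is_subcube 2 T,
      #|T| = 6 -> induced_cycle_len T 6 &
      #|T| = 8 -> induced_cycle_len T 8 \/ CL_trap F].
Proof.
move=> _ _ _ dT minT; split => HT.
- have [b [H4 Hb Hnb Hh]] := setup minT dT (HT : #|T| = 2 + 2) isT.
  exact: sq2 Hb Hnb Hh.
- have [b [H4 Hb Hnb Hh]] := setup minT dT (HT : #|T| = 3 + 3) isT.
  exact: cyc3 Hb Hnb (fin3 (size_gseq F T b 3) Hh).
- have [b [H4 Hb Hnb Hh]] := setup minT dT (HT : #|T| = 4 + 4) isT.
  case: (fin4 (size_gseq F T b 4) Hh) => H.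
  + by left; apply: cyc4 Hb Hnb H.
  + by right; apply: trap4 H4 Hb Hnb H.
Qed.
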